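(* Let $\Delta$ be a simplicial complex on vertex set $[n]$. Then there is a collection $\mathcal{X}=(X_1,\dots,X_n)$ of discrete subsets of $\mathbb{R}$, each containing $0$, such that $\Delta=\Delta(\mathcal{X};\mu)$ for some $\mu\in\mathbb{R}$. Moreover, there is a collection $\mathcal{X}=(X_1,\dots,X_n)$ of contractible subsets of $\mathbb{R}^2$, each containing the origin, and a point $\mu\in\mathbb{R}^2$ with $\Delta=\Delta(\mathcal{X};\mu)$.
   Context: For arbitrary sets $X_1,\dots,X_n\subseteq\mathbb{R}^d$ containing the origin and $\sigma\subseteq[n]$, write $X_\sigma=\sum_{i\in\sigma}X_i=\{\sum_{i\in\sigma}x_i: x_i\in X_i\}$ (Minkowski sum), with $X_\emptyset=\{0\}$. For $\mu\in\mathbb{R}^d$, the Minkowski complex $\Delta(\mathcal{X};\mu)$ is the simplicial complex on vertex set $[n]$ whose faces are the $\sigma\subseteq[n]$ with $\mu\notin X_\sigma$. *)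

(* Defs.v *)
From HB Require Import structures.
From mathcomp Require Import all_boot all_order all_algebra.
From mathcomp Require Import all_classical all_reals all_analysis.
Set Implicit Arguments. Unset Strict Implicit. Unset Printing Implicit Defensive.
Import Order.TTheory GRing.Theory Num.Theory.
Import numFieldNormedType.Exports.
Local Open Scope classical_set_scope.
Local Open Scope ring_scope.

Definition simplicial_complex (n : nat) (D : set {set 'I_n}) : Prop :=
  forall s t : {set 'I_n}, D s -> t \subset s -> D t.

Definition minkowski_sum (V : zmodType) (n : nat) (X : 'I_n -> set V)
    (sigma : {set 'I_n}) : set V :=
  [set v | exists x : 'I_n -> V,
     (forall i, i \in sigma -> X i (x i)) /\ v = \sum_(i in sigma) x i].

Definition minkowski_complex (V : zmodType) (n : nat) (X : 'I_n -> set V)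
    (mu : V) : set {set 'I_n} :=
  [set sigma | ~ minkowski_sum X sigma mu].

(* A discrete subset of R: every point of R has a neighbourhood meeting A in
   at most that point (i.e. A has no accumulation point; closed discrete). *)
Definition discrete_subset (R : realType) (A : set R) : Prop :=
  forall x : R, exists2 e : R, 0 < e &
    forall y, A y -> `|y - x| < e -> y = x.

Definition contractible_subset (R : realType) (T : topologicalType)
    (A : set T) : Prop :=
  exists2 a0 : T, A a0 &
  exists H : T * R -> T,
    [/\ {within A `*` [set` `[0%R, 1%R]], continuous H},
        (forall x t, A x -> t \in `[0%R, 1%R] -> A (H (x, t))),
        (forall x, A x -> H (x, 0%R) = x) &
        (forall x, A x -> H (x, 1%R) = a0)].

(* Main.v *)
Require Import Defs.
From HB Require Import structures.
From mathcomp Require Import all_boot all_order all_algebra.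
From mathcomp Require Import all_classical all_reals all_analysis.
From mathcomp Require Import zify lra.
Import Order.TTheory GRing.Theory Num.Theory.
Import numFieldNormedType.Exports.

Lemma sum_digits_lt (B n : nat) (f : 'I_n -> nat) : 0 < B ->
  (forall i, f i < B) -> \sum_(i < n) f i * B ^ i < B ^ n.
Proof.
move=> B0; elim: n f => [|n IH] f fB; first by rewrite big_ord0 expn0.
rewrite big_ord_recr /= expnS.
have h1 := IH (fun i => f (widen_ord (leqnSn n) i)) (fun i => fB _).
have h2 := fB ord_max.
move: h1 h2; set a := \sum_(_ < _) _; set P := B ^ n; set c := f _.
move=> h1 h2. nia.
Qed.

Lemma digits_inj (B n : nat) (f g : 'I_n -> nat) : 0 < B ->
  (forall i, f i < B) -> (forall i, g i < B) ->
  \sum_(i < n) f i * B ^ i = \sum_(i < n) g i * B ^ i -> forall i, f i = g i.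
Proof.
move=> B0; elim: n f g => [|n IH] f g fB gB; first by move=> _ [].
rewrite !big_ord_recr /=.
have h1 := @sum_digits_lt B n (fun i => f (widen_ord (leqnSn n) i)) B0 (fun i => fB _).
have h2 := @sum_digits_lt B n (fun i => g (widen_ord (leqnSn n) i)) B0 (fun i => gB _).
have hP : 0 < B ^ n by rewrite expn_gt0 B0.
move: h1 h2 hP; set a := \sum_(_ < _) _; set b := \sum_(_ < _) _; set P := B ^ n.
move=> h1 h2 hP E.
have fg : f ord_max = g ord_max.
  have := congr1 (fun x => x %/ P) E.
  by rewrite /= [a + _]addnC [b + _]addnC !divnMDl // !divn_small // !addn0.
have ab : a = b by move: E; rewrite fg => /eqP; rewrite eqn_add2r => /eqP.
have IH' := IH _ _ (fun i => fB _) (fun i => gB _) ab.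
move=> i; case: (unliftP ord_max i) => [j ->|-> //].
have := IH' j; have -> : lift ord_max j = widen_ord (leqnSn n) j by apply: val_inj => /=; rewrite /bump leqNgt ltn_ord.
by [].
Qed.

Set Implicit Arguments. Unset Strict Implicit.

Definition tagN n (t : {set 'I_n}) (i : 'I_n) : nat :=
  4 ^ n + \sum_(j in ~: t) 4 ^ j + 4 ^ i.
Definition muN n : nat := 4 ^ n + \sum_(j < n) 4 ^ j.
Definition goodN n (D : set {set 'I_n}) (i : 'I_n) (k : nat) : Prop :=
  k = 0 \/ k = 4 ^ i \/ exists t : {set 'I_n}, (~ D t) /\ (i \in t) /\ k = tagN t i.

Lemma sumall_lt n : \sum_(j < n) 4 ^ j < 4 ^ n.
Proof.
have := @sum_digits_lt 4 n (fun _ => 1) isT (fun _ => isT).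
by under eq_bigr do rewrite mul1n.
Qed.

Lemma sum_in_le n (s : {set 'I_n}) (F : 'I_n -> nat) :
  \sum_(i in s) F i <= \sum_(i < n) F i.
Proof. rewrite big_mkcond; apply: leq_sum => i _; by case: ifP. Qed.

Lemma key_nat_r n (D : set {set 'I_n}) (s : {set 'I_n}) :
  (forall s t : {set 'I_n}, D s -> t \subset s -> D t) -> D (finset.set0 : {set 'I_n}) ->
  ~ D s -> exists g : 'I_n -> nat,
   (forall i, i \in s -> goodN D i (g i)) /\ muN n = \sum_(i in s) g i.
Proof.
move=> Dsc D0 nDs.
have [l ls] : exists l, l \in s.
  case: (set_0Vmem s) => [s0|[l ls]]; last by exists l.
  by rewrite s0 in nDs.
exists (fun i => if i == l then tagN s l else 4 ^ i); split.
  move=> i iS; case: eqP => [->|_]; last by right; left.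
  by right; right; exists s.
rewrite (bigD1 l) //= eqxx.
have -> : \sum_(i in s | i != l) (if i == l then tagN s l else 4 ^ i) = \sum_(i in s | i != l) 4 ^ i.
  by apply: eq_bigr => i /andP[_ /negbTE ->].
rewrite /muN /tagN (bigID (mem s)) /= (bigD1 l) //=.
have -> : \sum_(i < n | true && ~~ (i \in s)) 4 ^ i = \sum_(j in ~: s) 4 ^ j.
  by apply: eq_bigl => i; rewrite finset.in_setC.
have -> : \sum_(i < n | true && (i \in s) && (i != l)) 4 ^ i =
   \sum_(i in s | i != l) 4 ^ i by [].
set A := \sum_(i in s | i != l) _. set C := \sum_(j in ~: s) _.
lia.
Qed.

Lemma good_small n (D : set {set 'I_n}) i k : goodN D i k -> k < 4 ^ n ->
  k = 0 \/ k = 4 ^ i.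
Proof.
case=> [->|[->|[t [_ [_ ->]]]]]; [by left|by right|].
rewrite /tagN; lia.
Qed.

Lemma key_nat_l n (D : set {set 'I_n}) (s : {set 'I_n}) :
  (forall s t : {set 'I_n}, D s -> t \subset s -> D t) ->
  forall g : 'I_n -> nat,
   (forall i, i \in s -> goodN D i (g i)) -> muN n = \sum_(i in s) g i ->
  ~ D s.
Proof.
move=> Dsc g gg E.
have hall := sumall_lt n.
case: (pickP (fun l => (l \in s) && (4 ^ n <= g l))) => [l /andP [ls gl]|nol]; last first.
  have : \sum_(i in s) g i <= \sum_(i in s) 4 ^ i.
    apply: leq_sum => i iS.
    have := nol i; rewrite iS /= => /negbT; rewrite -ltnNge => lt.
    by case: (good_small (gg i iS) lt) => ->.
  have := sum_in_le s (fun i => 4 ^ i).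
  rewrite -E /muN => h1 h2; exfalso; lia.
move: E; rewrite (bigD1 l) //= => E.
have small : forall i, (i \in s) && (i != l) -> g i = 0 \/ g i = 4 ^ i.
  move=> i /andP [iS il]; apply: (good_small (gg i iS)).
  rewrite ltnNge; apply/negP => gi.
  move: E; rewrite (bigD1 i) /=; last by rewrite iS il.
  rewrite /muN; lia.
have [t [nDt [lt gt]]] : exists t, ~ D t /\ l \in t /\ g l = tagN t l.
  case: (gg l ls) => [h|[h|//]]; rewrite h in gl.
    by move: gl; rewrite leqn0 expn_eq0.
  by move: gl; rewrite leq_exp2l // leqNgt ltn_ord.
suff: t \subset s by move=> ts Ds; apply: nDt; exact: Dsc Ds ts.
set d := fun j : 'I_n => (j \notin t) + (j == l) +
   ((j \in s) && (j != l) && (g j != 0)).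
have e1 : \sum_(j in ~: t) 4 ^ j = \sum_(j < n) (j \notin t) * 4 ^ j.
  rewrite big_mkcond; apply: eq_bigr => j _.
  by rewrite finset.in_setC; case: (j \in t) => /=; rewrite ?mul0n ?mul1n.
have e2 : 4 ^ l = \sum_(j < n) (j == l) * 4 ^ j.
  rewrite (bigD1 l) //= eqxx mul1n big1 ?addn0 //.
  by move=> j /negbTE ->.
have e3 : \sum_(i in s | i != l) g i =
          \sum_(j < n) ((j \in s) && (j != l) && (g j != 0)) * 4 ^ j.
  rewrite big_mkcond; apply: eq_bigr => j _ /=.
  case: ifP => [c|c] /=; last by [].
  case: (small j c) => ->; first by [].
  by rewrite expn_eq0 /= mul1n.
have e4 : \sum_(j < n) d j * 4 ^ j = \sum_(j < n) (j \notin t) * 4 ^ j +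
   \sum_(j < n) (j == l) * 4 ^ j +
   \sum_(j < n) ((j \in s) && (j != l) && (g j != 0)) * 4 ^ j.
  by rewrite -!big_split; apply: eq_bigr => j _; rewrite /d !mulnDl.
have e5 : \sum_(j < n) 1 * 4 ^ j = \sum_(j < n) 4 ^ j.
  by apply: eq_bigr => j _; rewrite mul1n.
have Ed : \sum_(j < n) 1 * 4 ^ j = \sum_(j < n) d j * 4 ^ j.
  rewrite e4 e5 -e1 -e2 -e3; move: E; rewrite gt /muN /tagN -!addnA => /addnI; rewrite !addnA => h; exact: h.
have dlt : forall i, d i < 4.
  move=> i; rewrite /d.
  by case: (i \in t); case: (i == l); case: (_ && _).
have dig := @digits_inj 4 n (fun _ => 1) d isT (fun _ => isT) dlt Ed.
apply/fintype.subsetP => j jt.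
have := dig j; rewrite /d jt /=.
case: eqP => [->|_] //=.
by case: (j \in s).
Qed.

Local Open Scope classical_set_scope.
Local Open Scope ring_scope.

Lemma cont_H (R : realType) (c : 'rV[R]_2) :
  continuous (fun p : 'rV[R]_2 * R => (1 - p.2) *: p.1 + p.2 *: c).
Proof.
move=> p.
apply: (@continuousD _ _ _ (fun p : 'rV[R]_2 * R => (1 - p.2) *: p.1) (fun p : 'rV[R]_2 * R => p.2 *: c)).
  apply: continuousZ.
    apply: continuousB; first exact: cst_continuous.
    exact: cvg_snd.
  exact: cvg_fst.
apply: continuousZ; first exact: cvg_snd.
exact: cst_continuous.
Qed.

Definition p1 (R : realType) (v : 'rV[R]_2) : R := v ord0 ord0.
Definition p2 (R : realType) (v : 'rV[R]_2) : R := v ord0 ord_max.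
Definition emb (R : realType) (a b : R) : 'rV[R]_2 :=
  \row_(j < 2) (if j == ord0 then a else b).

Lemma p1_emb (R : realType) (a b : R) : p1 (emb a b) = a.
Proof. by rewrite /p1 /emb mxE. Qed.
Lemma p2_emb (R : realType) (a b : R) : p2 (emb a b) = b.
Proof. by rewrite /p2 /emb mxE. Qed.

Definition X2 (R : realType) (A : set R) : set 'rV[R]_2 :=
  [set v | (A (p1 v) /\ p2 v = 0) \/ 0 < p2 v].

Lemma X2_contr (R : realType) (A : set R) : contractible_subset R (X2 A).
Proof.
set c : 'rV[R]_2 := emb 0 1.
have Xc : X2 A c by right; rewrite /c p2_emb.
exists c => //.
exists (fun p : 'rV[R]_2 * R => (1 - p.2) *: p.1 + p.2 *: c); split.
- apply: continuous_subspaceT. exact: cont_H.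
- move=> x t Xx; rewrite in_itv /= => /andP [t0 t1].
  have [->|tn0] := eqVneq t 0.
    by rewrite subr0 scale1r scale0r addr0.
  right; rewrite /p2 !mxE /= mulr1 -/(p2 x).
  have px : 0 <= p2 x by case: Xx => [[_ ->]|/ltW].
  have tp : 0 < t by rewrite lt0r tn0 t0.
  have : 0 <= (1 - t) * p2 x by apply: mulr_ge0 => //; rewrite subr_ge0.
  lra.
- by move=> x _ /=; rewrite subr0 scale1r scale0r addr0.
- by move=> x _ /=; rewrite subrr scale0r add0r scale1r.
Qed.

Lemma part2 (R : realType) n (A : 'I_n -> set R) (mu : R) :
  (forall i, A i 0) ->
  exists (X : 'I_n -> set 'rV[R]_2) (mu2 : 'rV[R]_2),
    (forall i, contractible_subset R (X i) /\ X i 0) /\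
    minkowski_complex A mu = minkowski_complex X mu2.
Proof.
move=> A0.
exists (fun i => X2 (A i)), (emb mu 0); split.
  move=> i; split; first exact: X2_contr.
  by left; rewrite /p1 /p2 !mxE.
rewrite predeqE => s; rewrite /minkowski_complex /=.
suff -> : minkowski_sum A s mu <-> minkowski_sum (fun i => X2 (A i)) s (emb mu 0)
  by [].
split.
- case=> y [yA ->].
  exists (fun i => emb (y i) 0); split.
    by move=> i iS; left; rewrite p1_emb p2_emb; split => //; apply: yA.
  apply/matrixP => a b; rewrite summxE !mxE.
  case: eqP => hb; [apply: eq_bigr => k _ | rewrite big1 // => k _]; rewrite /emb mxE; case: eqP => //.
- case=> x [xX E].
  have E2 : \sum_(i in s) p2 (x i) = 0.
    have := congr1 (@p2 R) E; rewrite /p2 summxE !mxE /= => <-; by [].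
  have pos : forall i, i \in s -> 0 <= p2 (x i).
    by move=> i /xX [[_ ->]|/ltW].
  have z := psumr_eq0P pos E2.
  exists (fun i => p1 (x i)); split.
    move=> i iS; case: (xX i iS) => [[] //|]; by rewrite (z i iS) ltxx.
  have := congr1 (@p1 R) E; rewrite /p1 summxE !mxE /= => ->; by [].
Qed.

Lemma nat_close (R : realType) (a b : nat) : `|a%:R - b%:R : R| < 1 -> a = b.
Proof.
move=> hn; case: (ltngtP a b) => // h; exfalso.
- have : a%:R + 1 <= b%:R :> R by rewrite natr1 ler_nat.
  have := Num.Theory.ler_norm (b%:R - a%:R : R); rewrite distrC; lra.
- have : b%:R + 1 <= a%:R :> R by rewrite natr1 ler_nat.
  have := Num.Theory.ler_norm (a%:R - b%:R : R); lra.
Qed.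

Lemma nat_discrete (R : realType) (A : set R) :
  (forall y, A y -> exists k : nat, y = k%:R) -> discrete_subset A.
Proof.
move=> An x.
case: (pselect (exists y, [/\ A y, `|y - x| < 1/2 & y != x])).
- case=> y0 [Ay0 d0 n0].
  exists `|y0 - x|; first by rewrite normr_gt0 subr_eq0.
  move=> y Ay dy; exfalso.
  have [k ek] := An y Ay; have [k0 e0] := An y0 Ay0; rewrite ek in dy.
  have : `|k%:R - y0| < 1.
    have := ler_distD x (k%:R) y0.
    rewrite (distrC x y0); lra.
  rewrite e0 => /nat_close ekk; move: dy; rewrite ekk -e0; lra.
- move=> H; exists (1/2); first lra.
  move=> y Ay dy; apply/eqP; apply/negP => ne; apply: H.
  by exists y; split => //; apply/negP.
Qed.

Lemma part1 (R : realType) (n : nat) (D : set {set 'I_n}) :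
  simplicial_complex D ->
  exists (X : 'I_n -> set R) (mu : R),
      (forall i, discrete_subset (X i) /\ X i 0) /\
      D = minkowski_complex X mu.
Proof.
move=> Dsc.
case: (pselect (D (finset.set0 : {set 'I_n}))) => D0; last first.
  exists (fun _ => [set x : R | exists k : nat, x = k%:R /\ k = 0%N]), 0; split.
    move=> i; split; last by exists 0%N.
    by apply: nat_discrete => y [k [-> _]]; exists k.
  rewrite predeqE => s; rewrite /minkowski_complex /=; split.
    move=> Ds; exfalso; apply: D0; apply: Dsc Ds _; exact: finset.sub0set.
  move=> H; exfalso; apply: H.
  exists (fun _ => 0); split; last by rewrite big1.
  by move=> i _; exists 0%N.
exists (fun i => [set x : R | exists k : nat, x = k%:R /\ goodN D i k]),
  (muN n)%:R; split.
  move=> i; split; last by exists 0%N; split => //; left.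
  by apply: nat_discrete => y [k [-> _]]; exists k.
rewrite predeqE => s; rewrite /minkowski_complex /=; split.
- move=> Ds [x [xX E]].
  have hex : forall i, exists k : nat, (i \in s -> x i = k%:R /\ goodN D i k).
    move=> i; case: (boolP (i \in s)) => iS; last by exists 0%N.
    by have [k [-> gk]] := xX i iS; exists k.
  have [g hg] := choice hex.
  apply: (key_nat_l Dsc (g := g)) Ds.
    by move=> i iS; case: (hg i iS).
  apply/eqP; rewrite -(eqr_nat R) E natr_sum; apply/eqP.
  by apply: eq_bigr => i iS; case: (hg i iS).
- move=> nm; case: (pselect (D s)) => // nDs; exfalso; apply: nm.
  have [g [gg E]] := key_nat_r Dsc D0 nDs.
  exists (fun i => (g i)%:R); split; first by move=> i iS; exists (g i); split => //; apply: gg.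
  by rewrite E natr_sum.
Qed.


Theorem proposition7 (R : realType) (n : nat) (D : set {set 'I_n}) :
  simplicial_complex D ->
  (exists (X : 'I_n -> set R) (mu : R),
      (forall i, discrete_subset (X i) /\ X i 0) /\
      D = minkowski_complex X mu) /\
  (exists (X : 'I_n -> set 'rV[R]_2) (mu : 'rV[R]_2),
      (forall i, contractible_subset R (X i) /\ X i 0) /\
      D = minkowski_complex X mu).
Proof.
move=> Dsc.
have [X [mu [hX E]]] := @part1 R n D Dsc.
split; first by exists X, mu.
have [X2 [mu2 [h2 E2]]] := @part2 R n X mu (fun i => (hX i).2).
by exists X2, mu2; split => //; rewrite E E2.
Qed.
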